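(* Let $A$ be a left brace with $A^{(3)}=\{0\}$ and let $a\in A$. Define $a_1=a$ and $a_{j+1}=a*a_j$ for $j\ge1$. Then for every positive integer $n$ and every $j\ge1$, \[(na)*a_j=\sum_{k=1}^n\binom{n}{k}a_{k+j},\] where $na$ denotes the $n$-fold sum $a+\dots+a$ in $(A,+)$.
   Context: A left brace $(A,+,\cdot)$ is a set $A$ with two binary operations such that $(A,+)$ is an abelian group, $(A,\cdot)$ is a group, and $a(b+c)=ab-a+ac$ for all $a,b,c\in A$. For $a,b\in A$ set $\lambda_a(b)=-a+ab$ and $a*b=-a+ab-b=\lambda_a(b)-b$. For subsets $L,M\subseteq A$, $L*M$ is the subgroup of $(A,+)$ generated by $\{l*m\mid l\in L,m\in M\}$. Set $A^{(1)}=A$ and $A^{(r+1)}=A^{(r)}*A$ for $r\ge1$. *)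

(* Defs.v *)
From mathcomp Require Import all_boot all_algebra.
Set Implicit Arguments. Unset Strict Implicit. Unset Printing Implicit Defensive.
Import GRing.Theory.
Local Open Scope ring_scope.

(* A left brace: (A,+) is the abelian group given by the zmodType A,
   (A,.) is a group given by bmul, bone, binv, and the brace compatibility
   a(b+c) = ab - a + ac holds. *)
Record left_brace (A : zmodType) := LeftBrace {
  bmul : A -> A -> A;
  bone : A;
  binv : A -> A;
  bmulA : forall a b c, bmul a (bmul b c) = bmul (bmul a b) c;
  bmul1l : forall a, bmul bone a = a;
  bmul1r : forall a, bmul a bone = a;
  bmulVl : forall a, bmul (binv a) a = bone;
  bmulVr : forall a, bmul a (binv a) = bone;
  bmulDr : forall a b c, bmul a (b + c) = bmul a b - a + bmul a c
}.

Definition bstar (A : zmodType) (B : left_brace A) (a b : A) : A :=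
  - a + bmul B a b - b.

Inductive add_span (A : zmodType) (S : A -> Prop) : A -> Prop :=
  | add_span_gen : forall x, S x -> add_span S x
  | add_span_0 : add_span S 0
  | add_span_sub : forall x y, add_span S x -> add_span S y -> add_span S (x - y).

Definition set_star (A : zmodType) (B : left_brace A) (L M : A -> Prop) : A -> Prop :=
  add_span (fun x => exists l m, L l /\ M m /\ x = bstar B l m).

(* brace_series B r = A^(r) (for r >= 1; A^(0) is set to A as well). *)
Fixpoint brace_series (A : zmodType) (B : left_brace A) (r : nat) : A -> Prop :=
  match r with
  | 0 => fun _ => True
  | 1 => fun _ => True
  | r'.+1 => set_star B (brace_series B r') (fun _ => True)
  end.

(* a_1 = a, a_{j+1} = a * a_j; seq_a B a j = a_j for j >= 1. *)
Fixpoint seq_a (A : zmodType) (B : left_brace A) (a : A) (j : nat) : A :=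
  match j with
  | 0 => a
  | 1 => a
  | j'.+1 => bstar B a (seq_a B a j')
  end.

(* Main.v *)
Require Import Defs.
From mathcomp Require Import all_boot all_algebra.
Import GRing.Theory.
Local Open Scope ring_scope.

Section Brace.
Variables (A : zmodType) (B : left_brace A).
Hypothesis H3 : forall x : A, brace_series B 3 x -> x = 0.

Local Notation m := (bmul B).
Definition lam (y x : A) := - y + m y x.

Lemma lamD y b c : lam y (b + c) = lam y b + lam y c.
Proof. by rewrite /lam bmulDr !addrA. Qed.

Lemma lam0 y : lam y 0 = 0.
Proof. have h := lamD y 0 0; rewrite addr0 in h.
by apply: (@addrI _ (lam y 0)); rewrite addr0 -h. Qed.

Lemma lamN y b : lam y (- b) = - lam y b.
Proof. by apply: (@addrI _ (lam y b)); rewrite -lamD !subrr lam0. Qed.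

Lemma lamB y b c : lam y (b - c) = lam y b - lam y c.
Proof. by rewrite lamD lamN. Qed.

Lemma lamM y z x : lam (m y z) x = lam y (lam z x).
Proof.
rewrite [lam z x]/lam lamD lamN /lam opprD opprK addrA (addrAC y) subrr add0r.
by rewrite bmulA.
Qed.

Lemma bone0 : bone B = 0.
Proof.
have := bmulDr B (bone B) 0 0; rewrite !bmul1l addr0 sub0r addr0.
by move=> /eqP; rewrite eq_sym oppr_eq0 => /eqP.
Qed.

Lemma lam1 x : lam 0 x = x.
Proof. by rewrite /lam oppr0 add0r -bone0 bmul1l. Qed.

Lemma lamVK z x : lam z (lam (binv B z) x) = x.
Proof. by rewrite -lamM bmulVr bone0 lam1. Qed.

Lemma bstarE y x : bstar B y x = lam y x - x.
Proof. by []. Qed.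

Lemma mulE y z : m y z = y + lam y z.
Proof. by rewrite /lam addrA subrr add0r. Qed.

Definition S2 := brace_series B 2.

Lemma S2_star u v : S2 (bstar B u v).
Proof. apply: add_span_gen; exists u, v; by []. Qed.

Lemma S2_add x y : S2 x -> S2 y -> S2 (x + y).
Proof.
move=> hx hy; rewrite -[y]opprK; move: hx hy; rewrite /S2 /= => hx hy.
apply: add_span_sub => //; rewrite -sub0r; apply: add_span_sub => //; exact: add_span_0.
Qed.

Lemma S2_lam v s : S2 s -> S2 (lam v s).
Proof.
move=> hs; have -> : lam v s = s + bstar B v s by rewrite bstarE addrC subrK.
by apply: S2_add => //; apply: S2_star.
Qed.

Lemma S2_lamid s x : S2 s -> lam s x = x.
Proof.
move=> hs; have : bstar B s x = 0.
  apply: H3; apply: add_span_gen; exists s, x; by [].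
by rewrite bstarE => /eqP; rewrite subr_eq0 => /eqP.
Qed.

Lemma lam_addS z w x : S2 w -> lam (z + w) x = lam z x.
Proof.
move=> hw; set w' := lam (binv B z) w.
have -> : z + w = m z w' by rewrite mulE /w' lamVK.
by rewrite lamM (S2_lamid _ x (S2_lam (binv B z) _ hw)).
Qed.

Lemma lam_add y z x : lam (y + z) x = lam y (lam z x).
Proof.
set z' := lam (binv B y) z.
have -> : y + z = m y z' by rewrite mulE /z' lamVK.
rewrite lamM; congr (lam y _).
have -> : z' = z + bstar B (binv B y) z by rewrite bstarE addrC subrK.
by apply: lam_addS; apply: S2_star.
Qed.

Variable a : A.
Definition d x := bstar B a x.

Lemma iterdD k x y : iter k d (x + y) = iter k d x + iter k d y.
Proof.
elim: k => //= k ->; rewrite /d !bstarE lamD opprD.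
by rewrite addrACA.
Qed.

Lemma lam_n n x :
  lam (a *+ n) x = \sum_(k < n.+1) iter k d x *+ 'C(n, k).
Proof.
elim: n x => [|n IH] x.
  by rewrite mulr0n lam1 big_ord_recl big_ord0 addr0.
rewrite mulrSr lam_add IH.
have -> : lam a x = x + d x by rewrite /d bstarE addrC subrK.
under eq_bigr => k _ do rewrite iterdD mulrnDl -iterSr.
rewrite big_split /=.
rewrite [in RHS]big_ord_recl /=.
under [in RHS]eq_bigr => k _ do rewrite binS mulrnDr.
rewrite big_split /= addrA; congr (_ + _).
rewrite [in RHS]big_ord_recr /= (bin_small (ltnSn n)) mulr0n addr0.
by rewrite [in LHS]big_ord_recl !bin0.
Qed.

Lemma seq_iter k j : (1 <= j)%N -> seq_a B a (k + j) = iter k d (seq_a B a j).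
Proof.
move=> hj; elim: k => // k IH.
rewrite iterS -IH addSn.
by case: (k + j)%N (leq_trans hj (leq_addl k j)) => [|[|p]].
Qed.

End Brace.

Theorem mainTheorem6 (A : zmodType) (B : left_brace A)
  (H3 : forall x : A, brace_series B 3 x -> x = 0) (a : A) (n j : nat) :
  (0 < n)%N -> (1 <= j)%N ->
  bstar B (a *+ n) (seq_a B a j) = \sum_(1 <= k < n.+1) (seq_a B a (k + j)) *+ 'C(n, k).
Proof.
move=> hn hj; rewrite bstarE lam_n // big_ord_recl /= bin0 mulr1n (addrC (seq_a B a j)) addrK.
rewrite big_add1 big_mkord; apply: eq_bigr => k _.
by rewrite (seq_iter _ _ _ _ _ hj) add0n -iterS.
Qed.
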